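(* Let $G_{\lambda,k}$ be a skeleton of a connected graph $G$ with natural map $f$, and let $M=\min\{\lambda,k\}$. If two distinct vertices $x,y$ of $G_{\lambda,k}$ are not joined by an edge, then their preimages $f^{-1}(x)$ and $f^{-1}(y)$ in $G$ are $M$-disjoint.
   Context: $d$ is the graph metric on vertices. Sets $X,Y$ are $M$-disjoint if $d(a,b)>M$ for all $a\in X,b\in Y$. A set $X$ is $k$-connected if any two of its points are joined by a finite sequence in $X$ with consecutive distances $\le k$. Skeleton $G_{\lambda,k}$ (root $x_0\in V(G)$, scale $\lambda\ge1$, connectivity $k\ge1$): layers $A_{N,\lambda}=\{x: N\lambda<d(x,x_0)\le(N+1)\lambda\}$, $N\in\mathbb Z$; blocks are the maximal $k$-connected subsets of layers; $G_{\lambda,k}$ has a vertex per block and an edge between two blocks iff an edge of $G$ joins a vertex of one to a vertex of the other. The natural map $f$ sends each vertex of $G$ to its block. *)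

(* Defs.v *)
From Stdlib Require Import Reals ZArith ClassicalEpsilon.
Open Scope R_scope.
Set Implicit Arguments.

Section Graph.
Variable V : Type.
Variable adj : V -> V -> Prop.

Inductive walk : V -> V -> nat -> Prop :=
  | walk0 : forall x, walk x x 0
  | walkS : forall x y z n, adj x y -> walk y z n -> walk x z (S n).

Definition symmetric_graph : Prop := forall x y, adj x y -> adj y x.

Definition connected_graph : Prop := forall x y, exists n, walk x y n.

(* graph metric: the length of a shortest walk (meaningful for connected graphs) *)
Definition gdist (x y : V) : nat :=
  epsilon (inhabits 0%nat)
    (fun n => walk x y n /\ forall m, walk x y m -> (n <= m)%nat).

Definition M_disjoint (M : R) (X Y : V -> Prop) : Prop :=
  forall a b, X a -> Y b -> INR (gdist a b) > M.

Inductive kchain (k : R) (X : V -> Prop) : V -> V -> Prop :=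
  | kchain0 : forall x, X x -> kchain k X x x
  | kchainS : forall x y z, X x -> INR (gdist x y) <= k -> kchain k X y z ->
              kchain k X x z.

Definition k_connected (k : R) (X : V -> Prop) : Prop :=
  forall x y, X x -> X y -> kchain k X x y.

Section Skeleton.
Variables (x0 : V) (lambda k : R).

Definition layer (N : Z) : V -> Prop :=
  fun x => IZR N * lambda < INR (gdist x x0) <= (IZR N + 1) * lambda.

Definition is_block (B : V -> Prop) : Prop :=
  (exists v, B v) /\
  exists N : Z,
    (forall v, B v -> layer N v) /\ k_connected k B /\
    (forall C : V -> Prop, (forall v, C v -> layer N v) -> k_connected k C ->
       (forall v, B v -> C v) -> C = B).

(* vertices of G_{lambda,k} are blocks; adjacency of blocks *)
Definition skel_adj (B1 B2 : V -> Prop) : Prop :=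
  exists a b, B1 a /\ B2 b /\ adj a b.

Definition natmap (v : V) : V -> Prop :=
  epsilon (inhabits (fun _ : V => False)) (fun B => is_block B /\ B v).

Definition preimage (B : V -> Prop) : V -> Prop := fun v => natmap v = B.

End Skeleton.
End Graph.

(* Main.v *)
Require Import Defs.
From Stdlib Require Import Reals ZArith.
From Stdlib Require Import Lra Lia Classical ClassicalEpsilon FunctionalExtensionality PropExtensionality.
Open Scope R_scope.

Section Aux.
Variable V : Type.
Variable adj : V -> V -> Prop.
Hypothesis Hsym : symmetric_graph adj.
Hypothesis Hconn : connected_graph adj.

Lemma walk_app x y z n m : walk adj x y n -> walk adj y z m -> walk adj x z (n + m).
Proof. induction 1; intros; simpl; auto. econstructor; eauto. Qed.

Lemma walk_rev x y n : walk adj x y n -> walk adj y x n.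
Proof.
  induction 1. constructor.
  replace (S n) with (n + 1)%nat by lia. apply walk_app with y; auto.
  econstructor. apply Hsym; eauto. constructor.
Qed.

Lemma walk_eq0 x y : walk adj x y 0 -> x = y.
Proof. inversion 1; auto. Qed.

Lemma least_ex x y : exists n, walk adj x y n /\ forall m, walk adj x y m -> (n <= m)%nat.
Proof.
  destruct (Hconn x y) as [n Hn].
  revert Hn. induction n as [n IH] using (well_founded_induction lt_wf). intros Hn.
  destruct (classic (exists m, (m < n)%nat /\ walk adj x y m)) as [[m [Hm Hw]]|Hno].
  - eapply IH; eauto.
  - exists n. split; auto. intros m Hm. destruct (le_lt_dec n m); auto.
    exfalso; apply Hno; eauto.
Qed.

Lemma gd_spec x y : walk adj x y (gdist adj x y) /\ forall m, walk adj x y m -> (gdist adj x y <= m)%nat.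
Proof. unfold gdist. apply epsilon_spec. apply least_ex. Qed.

Lemma gd_le x y m : walk adj x y m -> (gdist adj x y <= m)%nat.
Proof. apply gd_spec. Qed.

Lemma gd_sym x y : gdist adj x y = gdist adj y x.
Proof.
  apply Nat.le_antisymm; apply gd_le; apply walk_rev; apply gd_spec.
Qed.

Lemma gd_tri x y z : (gdist adj x z <= gdist adj x y + gdist adj y z)%nat.
Proof. apply gd_le. apply walk_app with y; apply gd_spec. Qed.

Lemma gd_adj x y : adj x y -> (gdist adj x y <= 1)%nat.
Proof. intros. apply gd_le. econstructor; eauto. constructor. Qed.

Lemma gdR_tri x y z : INR (gdist adj x z) <= INR (gdist adj x y) + INR (gdist adj y z).
Proof. rewrite <- plus_INR. apply le_INR, gd_tri. Qed.

Lemma gdR_adj x y : adj x y -> INR (gdist adj x y) <= 1.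
Proof. intros. change 1 with (INR 1). apply le_INR, gd_adj; auto. Qed.

Variable k : R.

Lemma kchain_end X x y : kchain adj k X x y -> X y.
Proof. induction 1; auto. Qed.
Lemma kchain_start X x y : kchain adj k X x y -> X x.
Proof. induction 1; auto. Qed.

Lemma kchain_app X x y z : kchain adj k X x y -> kchain adj k X y z -> kchain adj k X x z.
Proof. induction 1; intros; auto. econstructor; eauto. Qed.

Lemma kchain_mono (X Y : V -> Prop) x y : (forall v, X v -> Y v) ->
  kchain adj k X x y -> kchain adj k Y x y.
Proof. intros HXY. induction 1. constructor; auto. econstructor; eauto. Qed.

Lemma kchain_one X x y : X x -> X y -> INR (gdist adj x y) <= k -> kchain adj k X x y.
Proof. intros. econstructor; eauto. constructor; auto. Qed.

Lemma kchain_rev X x y : kchain adj k X x y -> kchain adj k X y x.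
Proof.
  induction 1. constructor; auto.
  apply kchain_app with y; auto.
  apply kchain_one; [eapply kchain_start; eauto | auto | rewrite gd_sym; auto].
Qed.


Variables (x0 : V) (lambda : R).
Hypothesis Hl : 1 <= lambda.

Lemma block_mem B N a u : is_block adj x0 lambda k B ->
  (forall v, B v -> layer adj x0 lambda N v) ->
  B a -> layer adj x0 lambda N u -> INR (gdist adj a u) <= k -> B u.
Proof.
  intros [_ [N' [HL [Hc Hmax]]]] HLN Ha Hu Hd.
  assert (HN : N' = N).
  { specialize (HL a Ha). specialize (HLN a Ha). unfold layer in *.
    assert (IZR N' < IZR N + 1) by nra. assert (IZR N < IZR N' + 1) by nra.
    rewrite <- (plus_IZR _ 1) in H; rewrite <- (plus_IZR _ 1) in H0. apply lt_IZR in H. apply lt_IZR in H0. lia. }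
  subst N'.
  set (C := fun v => B v \/ v = u).
  assert (E : C = B).
  { apply Hmax.
    - intros v [Hv|Hv]; [auto|subst v; auto].
    - assert (Hau : kchain adj k C a u) by (apply kchain_one; unfold C; auto).
      intros x y [Hx|Hx] [Hy|Hy]; try subst x; try subst y.
      + apply kchain_mono with B; unfold C; auto.
      + apply kchain_app with a; auto. apply kchain_mono with B; unfold C; auto.
      + apply kchain_app with a. apply kchain_rev; auto.
        apply kchain_mono with B; unfold C; auto.
      + constructor; unfold C; auto.
    - unfold C; auto. }
  assert (C u) by (unfold C; auto). rewrite E in H; auto.
Qed.

Lemma block_same B1 B2 N a b : is_block adj x0 lambda k B1 -> is_block adj x0 lambda k B2 ->
  (forall v, B1 v -> layer adj x0 lambda N v) ->
  (forall v, B2 v -> layer adj x0 lambda N v) ->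
  B1 a -> B2 b -> INR (gdist adj a b) <= k -> B1 = B2.
Proof.
  intros HB1 HB2 L1 L2 Ha Hb Hd.
  assert (Hb1 : B1 b) by (eapply block_mem; eauto).
  assert (forall B B', is_block adj x0 lambda k B -> (forall v, B v -> layer adj x0 lambda N v) ->
     (forall v, B' v -> layer adj x0 lambda N v) -> k_connected adj k B' -> B b -> B' b ->
     (fun v => B v \/ B' v) = B) as key.
  { intros B B' [_ [N' [HL [Hc Hmax]]]] LB LB' Hc' Bb B'b.
    destruct HB1 as [_ [N1 [HL1 _]]].
    assert (N' = N).
    { specialize (HL b Bb). specialize (LB b Bb). unfold layer in *.
      assert (IZR N' < IZR N + 1) by nra. assert (IZR N < IZR N' + 1) by nra.
      rewrite <- (plus_IZR _ 1) in H; rewrite <- (plus_IZR _ 1) in H0. apply lt_IZR in H. apply lt_IZR in H0. lia. }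
    subst N'. apply Hmax.
    - intros v [|]; auto.
    - intros x y [Hx|Hx] [Hy|Hy].
      + apply kchain_mono with B; auto.
      + apply kchain_app with b; [apply kchain_mono with B|apply kchain_mono with B']; auto.
      + apply kchain_app with b; [apply kchain_mono with B'|apply kchain_mono with B]; auto.
      + apply kchain_mono with B'; auto.
    - auto. }
  assert (HB1' := HB1). assert (HB2' := HB2).
  destruct HB1' as [_ [_ [_ [Hc1 _]]]]. destruct HB2' as [_ [_ [_ [Hc2 _]]]].
  rewrite <- (key B1 B2), <- (key B2 B1) at 1; auto.
  apply functional_extensionality; intros v; apply propositional_extensionality; tauto.
Qed.


Lemma layer_ex v : exists N, layer adj x0 lambda N v.
Proof.
  set (d := INR (gdist adj v x0)).
  set (x := d / lambda).
  destruct (archimed (- x)) as [H1 H2].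
  exists (- up (- x))%Z. unfold layer. fold d. rewrite opp_IZR.
  assert (Hd : d = x * lambda) by (unfold x; field; lra).
  rewrite Hd. split; nra.
Qed.

Lemma block_ex v : exists B, is_block adj x0 lambda k B /\ B v.
Proof.
  destruct (layer_ex v) as [N HN].
  set (X := layer adj x0 lambda N).
  set (B := fun w => kchain adj k X v w).
  assert (Bv : B v) by (constructor; auto).
  assert (BX : forall w, B w -> X w) by (intros w Hw; eapply kchain_end; eauto).
  assert (lift : forall p q, kchain adj k X p q -> B p -> kchain adj k B p q).
  { induction 1; intros Bp. constructor; auto.
    assert (B y). { apply kchain_app with x; auto. apply kchain_one; auto.
      eapply kchain_start; eauto. }
    econstructor; eauto. }
  exists B. split; auto. split. eauto. exists N. split; [exact BX|]. split.
  - intros x y Bx By. apply lift; auto. apply kchain_app with v.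
    apply kchain_rev; auto. exact By.
  - intros C HC Cc HBC. apply functional_extensionality; intros w.
    apply propositional_extensionality; split; auto.
    intros Cw. unfold B. apply kchain_mono with C; auto.
Qed.

Lemma pre_in B a : is_block adj x0 lambda k B -> preimage adj x0 lambda k B a -> B a.
Proof.
  intros HB HP. unfold preimage, natmap in HP.
  destruct (epsilon_spec (inhabits (fun _ : V => False))
     (fun B => is_block adj x0 lambda k B /\ B a) (block_ex a)) as [_ H].
  rewrite HP in H. exact H.
Qed.

Lemma cross B1 B2 N1 a b : is_block adj x0 lambda k B1 -> is_block adj x0 lambda k B2 ->
  (forall v, B1 v -> layer adj x0 lambda N1 v) ->
  (forall v, B2 v -> layer adj x0 lambda (N1 + 1) v) ->
  B1 a -> B2 b -> ~ skel_adj adj B1 B2 ->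
  forall n u, walk adj u b n -> INR (gdist adj u x0) <= (IZR N1 + 1) * lambda ->
  INR (gdist adj a u) + INR n <= k -> False.
Proof.
  intros HB1 HB2 L1 L2 Ha Hb Hna n u Hw.
  induction Hw as [u|u w z n Huw Hw IH]; intros Hu Hd.
  - specialize (L2 u Hb). unfold layer in L2. rewrite plus_IZR in L2. lra.
  - rewrite S_INR in Hd.
    assert (g0 : 0 <= INR (gdist adj a u)) by apply pos_INR.
    assert (g1 := gdR_adj _ _ Huw).
    assert (g2 := gdR_tri a u w).
    assert (g3 := gdR_tri w u x0). rewrite (gd_sym w u) in g3.
    assert (g4 := gdR_tri u w x0).
    destruct (Rle_lt_dec (INR (gdist adj w x0)) ((IZR N1 + 1) * lambda)) as [Hle|Hlt].
    + apply IH; auto. lra.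
    + apply Hna. exists u, w. split; [|split; auto].
      * eapply block_mem with (N := N1); eauto.
        unfold layer; split; nra. assert (0 <= INR n) by apply pos_INR. lra.
      * assert (Hwb : B2 w).
        { eapply block_mem with (a := z) (N := (N1+1)%Z); eauto.
          unfold layer; rewrite plus_IZR; split; nra.
          rewrite gd_sym. apply Rle_trans with (INR n).
          apply le_INR, gd_le; auto. lra. }
        exact Hwb.
Qed.

End Aux.

Theorem lemma4 (V : Type) (adj : V -> V -> Prop)
  (Hsym : symmetric_graph adj) (Hconn : connected_graph adj)
  (x0 : V) (lambda k : R) (Hl : 1 <= lambda) (Hk : 1 <= k)
  (B1 B2 : V -> Prop)
  (HB1 : is_block adj x0 lambda k B1) (HB2 : is_block adj x0 lambda k B2)
  (Hne : B1 <> B2) (Hnadj : ~ skel_adj adj B1 B2) :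
  M_disjoint adj (Rmin lambda k)
    (preimage adj x0 lambda k B1) (preimage adj x0 lambda k B2).
Proof.
  intros a b Pa Pb.
  assert (Ha := pre_in V adj Hsym Hconn k x0 lambda Hl B1 a HB1 Pa).
  assert (Hb := pre_in V adj Hsym Hconn k x0 lambda Hl B2 b HB2 Pb).
  destruct (Rle_lt_dec (INR (gdist adj a b)) (Rmin lambda k)) as [Hd|]; [exfalso|lra].
  assert (Hdl : INR (gdist adj a b) <= lambda) by (eapply Rle_trans; [exact Hd| apply Rmin_l]).
  assert (Hdk : INR (gdist adj a b) <= k) by (eapply Rle_trans; [exact Hd| apply Rmin_r]).
  assert (HB1' := HB1). assert (HB2' := HB2).
  destruct HB1' as [_ [N1 [L1 _]]]. destruct HB2' as [_ [N2 [L2 _]]].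
  assert (La := L1 a Ha). assert (Lb := L2 b Hb). unfold layer in La, Lb.
  assert (t1 := gdR_tri V adj Hconn b a x0). rewrite (gd_sym V adj Hsym Hconn b a) in t1.
  assert (t2 := gdR_tri V adj Hconn a b x0).
  destruct (Z.lt_total N1 N2) as [H12|[H12|H12]].
  - assert (N2 = N1 + 1)%Z.
    { assert (IZR N2 < IZR N1 + 2) by nra. assert (IZR N1 < IZR N2) by (apply IZR_lt; auto).
      rewrite <- (plus_IZR _ 2) in H. apply lt_IZR in H. lia. }
    subst N2.
    apply (cross V adj Hsym Hconn k x0 lambda Hl B1 B2 N1 a b HB1 HB2 L1 L2 Ha Hb Hnadj _ _ (proj1 (gd_spec V adj Hconn a b))).
    lra.
    assert ((gdist adj a a <= 0)%nat) by (eapply gd_le; eauto; constructor).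
    assert (gdist adj a a = 0%nat) by lia. rewrite H0. simpl. lra.
  - subst N2. apply Hne. exact (block_same V adj Hsym Hconn k x0 lambda Hl B1 B2 N1 a b HB1 HB2 L1 L2 Ha Hb Hdk).
  - assert (N1 = N2 + 1)%Z.
    { assert (IZR N1 < IZR N2 + 2) by nra. assert (IZR N2 < IZR N1) by (apply IZR_lt; auto).
      rewrite <- (plus_IZR _ 2) in H. apply lt_IZR in H. lia. }
    subst N1.
    assert (Hna' : ~ skel_adj adj B2 B1).
    { intros [u [v [Hu [Hv Huv]]]]. apply Hnadj. exists v, u. auto. }
    apply (cross V adj Hsym Hconn k x0 lambda Hl B2 B1 N2 b a HB2 HB1 L2 L1 Hb Ha Hna' _ _ (proj1 (gd_spec V adj Hconn b a))).
    lra.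
    assert ((gdist adj b b <= 0)%nat) by (eapply gd_le; eauto; constructor).
    assert (gdist adj b b = 0%nat) by lia. rewrite H0. simpl.
    rewrite (gd_sym V adj Hsym Hconn b a). lra.
Qed.
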